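(* Let $0<p<1$ and let $L<U$ be integers with $U-L\ge 4$. With the notation of the context, for every integer $x\in[L,U]$ the limit $m(x)=\lim_{k\to\infty}m_k(x)$ exists (and is finite), where $m_k(x)=\mathbb{E}\tau^x_k$.
   Context: Let $\xi_1,\xi_2,\dots$ be i.i.d. random variables with values in $\{1,-1\}$, $\mathbb{P}(\xi_i=1)=p$, $\mathbb{P}(\xi_i=-1)=q:=1-p$. Define $X_k=-1$ if $\xi_k=-1$; $X_k=2$ if $\xi_k=\xi_{k-1}=1$ (for $k\ge 2$); and $X_k=1$ otherwise (in particular $X_1=1$ when $\xi_1=1$). Let $S_0=0$, $S_k=X_1+\dots+X_k$, and $S^x_k=x+S_k$. For $k\ge 0$ let $\tau^x_k=\min\{l\in\{0,\dots,k\}: S^x_l\le L \text{ or } S^x_l\ge U\}$ if this set is nonempty, and $\tau^x_k=k$ otherwise. *)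

(* Defs.v *)
From HB Require Import structures.
From mathcomp Require Import all_boot all_order all_algebra.
From mathcomp Require Import all_classical all_reals all_analysis.
Set Implicit Arguments. Unset Strict Implicit. Unset Printing Implicit Defensive.
Import Order.TTheory GRing.Theory Num.Theory.
Local Open Scope ring_scope.

(* An outcome is w : nat -> bool; w i = true encodes xi_{i+1} = 1,
   w i = false encodes xi_{i+1} = -1 (0-based indices). *)

Definition Xval (w : nat -> bool) (i : nat) : int :=
  if w i then (if (0 < i)%N && w i.-1 then 2 else 1) else -1.

Definition Ssum (w : nat -> bool) (l : nat) : int := \sum_(i < l) Xval w i.

Definition exited (L U x : int) (w : nat -> bool) (l : nat) : bool :=
  (x + Ssum w l <= L) || (U <= x + Ssum w l).

Definition tau (L U x : int) (k : nat) (w : nat -> bool) : nat :=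
  minn (find (exited L U x w) (iota 0 k.+1)) k.

(* extend a finite outcome (xi_1..xi_k) to an infinite one (irrelevant tail) *)
Definition ext (k : nat) (f : {ffun 'I_k -> bool}) (i : nat) : bool :=
  if insub i is Some j then f j else false.

Definition weight (R : realType) (p : R) (k : nat) (f : {ffun 'I_k -> bool}) : R :=
  \prod_(i < k) (if f i then p else 1 - p).

(* m_k(x) = E tau^x_k  (tau^x_k depends only on xi_1..xi_k) *)
Definition m_k (R : realType) (p : R) (L U x : int) (k : nat) : R :=
  \sum_(f : {ffun 'I_k -> bool}) weight p f * (tau L U x k (ext f))%:R.

(* Main.v *)
Require Import Defs.
From HB Require Import structures.
From mathcomp Require Import all_boot all_order all_algebra.
From mathcomp Require Import all_classical all_reals all_analysis.
From mathcomp Require Import zify.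
From mathcomp Require Import lra.
Import Order.TTheory GRing.Theory Num.Theory.
Import numFieldNormedType.Exports.
Local Open Scope classical_set_scope.
Local Open Scope ring_scope.

Definition upd (w : nat -> bool) (k : nat) (b : bool) : nat -> bool :=
  fun i => if i == k then b else w i.

Definition EE {R : realType} (p : R) (k : nat) (g : (nat -> bool) -> R) : R :=
  \sum_(f : {ffun 'I_k -> bool}) weight p f * g (ext f).

Definition phi (k : nat) (fb : {ffun 'I_k -> bool} * bool) : {ffun 'I_k.+1 -> bool} :=
  [ffun i : 'I_k.+1 => match (insub (val i) : option 'I_k) with Some j => fb.1 j | None => fb.2 end].

Arguments phi {k}.
Definition psi (k : nat) (g : {ffun 'I_k.+1 -> bool}) : {ffun 'I_k -> bool} * bool :=
  ([ffun j : 'I_k => g (widen_ord (leqnSn k) j)], g ord_max).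

Arguments psi {k}.
Lemma ext_phi k (f : {ffun 'I_k -> bool}) b : ext (phi (f, b)) = upd (ext f) k b.
Proof.
apply: funext => i; rewrite /ext /upd.
case: (@insubP _ _ ('I_k.+1) i) => [j Hj Ej|Hn].
  rewrite ffunE /= Ej.
  case: (@insubP _ _ ('I_k) i) => [j' Hj' Ej'|Hn'].
    have -> : i == k = false by apply/negbTE; rewrite neq_ltn Hj'.
    case: (@insubP _ _ ('I_k) i) => [j'' _ Ej''|]; last by rewrite Hj'.
    by congr (f _); apply: val_inj; rewrite Ej' Ej''.
  have -> : i == k by rewrite eqn_leq -ltnS Hj leqNgt Hn'.
  case: (@insubP _ _ ('I_k) i) => [j'' H'' _|//]; by rewrite H'' in Hn'.
have -> : i == k = false by apply/negbTE; rewrite neq_ltn orbC ltnNge -ltnS Hn.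
case: (@insubP _ _ ('I_k) i) => [j'' H'' _|//].
by move: Hn; rewrite ltnS ltnW.
Qed.

Lemma weight_phi (R : realType) (p : R) k (f : {ffun 'I_k -> bool}) b :
  weight p (phi (f, b)) = weight p f * (if b then p else 1 - p).
Proof.
rewrite /weight big_ord_recr /= !ffunE /=.
case: (@insubP _ _ ('I_k) (val (@ord_max k))) => [j Hj _|_]; first by rewrite ltnn in Hj.
congr (_ * _); apply: eq_bigr => i _; rewrite ffunE /=.
case: (@insubP _ _ ('I_k) (val i)) => [j Hj Ej|]; last by rewrite ltn_ord.
by have -> : j = i by apply: val_inj.
Qed.

Lemma phi_bij k : bijective (@phi k).
Proof.
exists (@psi k).
  case=> f b; rewrite /psi /= ffunE /=.
  case: (@insubP _ _ ('I_k) (val (@ord_max k))) => [j Hj _|_]; first by rewrite ltnn in Hj.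
  congr (_, _); apply/ffunP => j; rewrite !ffunE /=.
  case: (@insubP _ _ ('I_k) (val j)) => [j' Hj Ej|]; last by rewrite ltn_ord.
  by have -> : j' = j by apply: val_inj.
move=> g; apply/ffunP => i; rewrite /phi /psi ffunE /=.
case: (@insubP _ _ ('I_k) (val i)) => [j Hj Ej|Hn].
  by rewrite ffunE; congr (g _); apply: val_inj.
congr (g _); apply: val_inj => /=; apply/eqP; rewrite eqn_leq leqNgt Hn /= -ltnS; exact: ltn_ord.
Qed.

Lemma Estep (R : realType) (p : R) k g :
  EE p k.+1 g = p * EE p k (fun w => g (upd w k true)) + (1 - p) * EE p k (fun w => g (upd w k false)).
Proof.
rewrite /EE (reindex (@phi k)); last by apply: onW_bij; apply: phi_bij.
rewrite (eq_bigr (fun j => (weight p j.1 * (if j.2 then p else 1 - p)) * g (upd (ext j.1) k j.2))); last first.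
  by case=> f b _ /=; rewrite weight_phi ext_phi.
rewrite -(pair_big xpredT xpredT (fun f b => (weight p f * (if b then p else 1 - p)) * g (upd (ext f) k b))) /=.
rewrite !big_distrr -big_split /=; apply: eq_bigr => f _.
rewrite big_bool /=; congr (_ + _); rewrite mulrCA mulrA //.
Qed.

Definition dep (k : nat) {R : realType} (g : (nat -> bool) -> R) :=
  forall w w', (forall i, (i < k)%N -> w i = w' i) -> g w = g w'.

Lemma Edep (R : realType) (p : R) k0 k (g : (nat -> bool) -> R) j :
  dep k0 g -> (k0 <= k)%N -> EE p (k + j) g = EE p k g.
Proof.
move=> Hg Hk; elim: j => [|j IH]; first by rewrite addn0.
rewrite addnS Estep.
have E b : EE p (k + j) (fun w => g (upd w (k + j) b)) = EE p (k + j) g.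
  apply: eq_bigr => f _; congr (_ * _); apply: Hg => i Hi.
  rewrite /upd; case: eqP => // Ei; exfalso; move: Hi; rewrite Ei; lia.
by rewrite !E IH -mulrDl addrC subrK mul1r.
Qed.

Lemma Eadd (R : realType) (p : R) k (g1 g2 : (nat -> bool) -> R) :
  EE p k (fun w => g1 w + g2 w) = EE p k g1 + EE p k g2.
Proof. by rewrite /EE -big_split; apply: eq_bigr => f _; rewrite mulrDr. Qed.

Lemma Escale (R : realType) (p : R) k (c : R) (g : (nat -> bool) -> R) :
  EE p k (fun w => c * g w) = c * EE p k g.
Proof. by rewrite /EE big_distrr; apply: eq_bigr => f _; rewrite mulrCA. Qed.

Lemma Ele (R : realType) (p : R) k (g1 g2 : (nat -> bool) -> R) :
  0 <= p -> p <= 1 -> (forall w, g1 w <= g2 w) -> EE p k g1 <= EE p k g2.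
Proof.
move=> p0 p1 H; rewrite /EE; apply: ler_sum => f _; apply: ler_wpM2l => //.
apply: prodr_ge0 => i _; case: (f i) => //; by rewrite subr_ge0.
Qed.

Lemma E0 (R : realType) (p : R) (g : (nat -> bool) -> R) :
  EE p 0 g = g (fun _ => false).
Proof.
rewrite /EE (eq_bigr (fun _ => g (fun _ => false))).
  by rewrite sumr_const card_ffun card_ord expn0.
move=> f _; rewrite /weight big_ord0 mul1r; congr g; apply: funext => i.
by rewrite /ext; case: (@insubP _ _ ('I_0) i) => // j; rewrite ltn0.
Qed.

Lemma Econst (R : realType) (p : R) k (c : R) : EE p k (fun _ => c) = c.
Proof. by rewrite -(add0n k) (@Edep _ _ 0 0) ?E0 // => w w'. Qed.

Lemma Ssum_dep w w' l : (forall i, (i < l)%N -> w i = w' i) -> Ssum w l = Ssum w' l.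
Proof.
move=> H; rewrite /Ssum; apply: eq_bigr => i _; rewrite /Xval.
rewrite (H i (ltn_ord i)); case: (w' i) => //.
case: (posnP i) => [->//|Hi] /=; rewrite H //; have := ltn_ord i; lia.
Qed.

Definition Nk (L U x : int) (w : nat -> bool) (k : nat) : bool :=
  ~~ has (exited L U x w) (iota 0 k.+1).

Lemma Nk_dep L U x w w' k : (forall i, (i < k)%N -> w i = w' i) -> Nk L U x w k = Nk L U x w' k.
Proof.
move=> H; rewrite /Nk; congr negb; apply: eq_in_has => l; rewrite mem_iota => /andP[_ Hl].
rewrite /exited (@Ssum_dep w w') // => i Hi; apply: H; lia.
Qed.

Lemma tau0 L U x w : tau L U x 0 w = 0%N.
Proof. by rewrite /tau minn0. Qed.

Lemma tau_rec L U x k w : tau L U x k.+1 w = (tau L U x k w + Nk L U x w k)%N.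
Proof.
rewrite /tau /Nk -addn1 iotaD find_cat add0n.
set s := iota 0 k.+1; set P := exited L U x w.
have Hs : size s = k.+1 by rewrite size_iota.
case Hh: (has P s).
  move: Hh; rewrite has_find Hs => Hf; rewrite addn0; lia.
rewrite (hasNfind (negbT Hh)) Hs /=; lia.
Qed.

Lemma tau_dep L U x k w w' : (forall i, (i < k)%N -> w i = w' i) -> tau L U x k w = tau L U x k w'.
Proof.
elim: k => [|k IH] H; first by rewrite !tau0.
rewrite !tau_rec IH; last by move=> i Hi; apply: H; lia.
by rewrite (@Nk_dep L U x w w') // => i Hi; apply: H; lia.
Qed.

Definition Ablk (k n : nat) (w : nat -> bool) : bool := all (fun i => w (k + i)%N) (iota 0 n).

Lemma Nk_block L U x w k n : (U - L <= n%:Z) -> Nk L U x w (k + n) -> Ablk k n w = false.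
Proof.
move=> Hn HN; apply/negP => HA.
have Hk : ~~ exited L U x w k.
  apply: contra HN => Hk; apply/hasP; exists k => //; rewrite mem_iota; lia.
have Hkn : ~~ exited L U x w (k + n).
  apply: contra HN => Hk'; apply/hasP; exists (k + n)%N => //; rewrite mem_iota; lia.
have Hs : Ssum w k + n%:Z <= Ssum w (k + n).
  rewrite /Ssum -!(big_mkord xpredT (fun i => Xval w i)) (big_cat_nat _ (leq_addr n k)) //=.
  rewrite lerD2l; apply: (@le_trans _ _ (\sum_(k <= i < k + n) (1:int))).
    rewrite sumr_const_nat addKn.
    by rewrite natz.
  apply: ler_sum_nat => i /andP[Hi1 Hi2].
  have : w i.
    move/allP: HA => /(_ (i - k)%N); rewrite mem_iota.
    have -> : (k + (i - k))%N = i by lia.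
    by apply; lia.
  rewrite /Xval => ->; by case: ifP.
move: Hk Hkn; rewrite /exited !negb_or -!ltNge => /andP[H1 H2] /andP[H3 H4].
lia.
Qed.

Lemma Eblock (R : realType) (p : R) k (h : (nat -> bool) -> R) j :
  dep k h -> EE p (k + j) (fun w => h w * (Ablk k j w)%:R) = p ^+ j * EE p k h.
Proof.
move=> Hh; elim: j => [|j IH].
  rewrite addn0 expr0 mul1r; apply: eq_bigr => f _; by rewrite /Ablk /= mulr1.
rewrite addnS Estep.
have E1 : EE p (k + j) (fun w => h (upd w (k + j) true) * (Ablk k j.+1 (upd w (k + j) true))%:R)
        = EE p (k + j) (fun w => h w * (Ablk k j w)%:R).
  apply: eq_bigr => f _; congr (_ * (_ * _)).
    apply: Hh => i Hi; rewrite /upd; case: eqP => // Ei; exfalso; move: Hi; rewrite Ei; lia.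
  rewrite /Ablk -addn1 iotaD all_cat /= add0n /upd eqxx andbT; congr (_%:R).
  congr (nat_of_bool _); rewrite andbT; apply: eq_in_all => i; rewrite mem_iota => /andP[_ Hi]; case: eqP => // Ei; exfalso; lia.
have E2 : EE p (k + j) (fun w => h (upd w (k + j) false) * (Ablk k j.+1 (upd w (k + j) false))%:R) = 0.
  rewrite /EE big1 // => f _.
  rewrite /Ablk -addn1 iotaD all_cat /= add0n /upd eqxx andbF /=; by rewrite !mulr0.
by rewrite E1 E2 mulr0 addr0 IH exprS mulrA.
Qed.

Definition gN (R : realType) (L U x : int) (k : nat) (w : nat -> bool) : R := (Nk L U x w k)%:R.
Definition q {R : realType} (p : R) (L U x : int) (k : nat) : R := EE p k (gN R L U x k).

Lemma gN_dep (R : realType) L U x k : dep k (gN R L U x k).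
Proof. by move=> w w' H; rewrite /gN (@Nk_dep L U x w w'). Qed.

Lemma m_rec (R : realType) (p : R) L U x k :
  m_k p L U x k.+1 = m_k p L U x k + q p L U x k.
Proof.
have -> : m_k p L U x k.+1 = EE p k.+1 (fun w => (tau L U x k.+1 w)%:R) by [].
have -> : EE p k.+1 (fun w => (tau L U x k.+1 w)%:R) = EE p k.+1 (fun w => (tau L U x k w)%:R + gN R L U x k w) by apply: eq_bigr => f _; rewrite tau_rec natrD.
rewrite Eadd.
rewrite -addn1 (@Edep _ _ k k) //; last by move=> w w' H; rewrite (@tau_dep L U x k w w').
by rewrite (@Edep _ _ k k) //; apply: gN_dep.
Qed.

Lemma q_bounds (R : realType) (p : R) L U x k : 0 <= p -> p <= 1 ->
  0 <= q p L U x k <= 1.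
Proof.
move=> p0 p1; apply/andP; split.
  rewrite -(@Econst R p k 0); apply: Ele => // w; rewrite /gN; by case: Nk.
rewrite -(@Econst R p k 1); apply: Ele => // w; rewrite /gN; by case: Nk.
Qed.

Lemma q_decay (R : realType) (p : R) L U x k n : 0 <= p -> p <= 1 -> (U - L <= n%:Z) ->
  q p L U x (k + n) <= (1 - p ^+ n) * q p L U x k.
Proof.
move=> p0 p1 Hn.
rewrite /q.
apply: (@le_trans _ _ (EE p (k + n) (fun w => gN R L U x k w + (- 1) * (gN R L U x k w * (Ablk k n w)%:R)))).
  apply: Ele => // w; rewrite /gN.
  case HN: (Nk L U x w (k + n)).
  2: { case: (Nk L U x w k); case: (Ablk k n w); rewrite /= ?(mulr0, mulr1, mul0r, mul1r, addr0, subrr, mulN1r).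
       all: by rewrite ?subr0 ?lexx ?ler01. }
  have -> : Ablk k n w = false by exact: (Nk_block L U x w k n Hn HN).
  have -> : Nk L U x w k.
    apply: contraTT HN; rewrite /Nk !negbK => /hasP[l Hl Hex]; apply/hasP; exists l => //.
    move: Hl; rewrite !mem_iota; lia.
  by rewrite mulr0 mulr0 addr0.
rewrite Eadd Escale Eblock; last by apply: gN_dep.
rewrite (@Edep _ _ k k) //; last by apply: gN_dep.
by rewrite mulrBl mul1r mulN1r.
Qed.

Theorem theorem3p2 (R : realType) (p : R) (L U x : int) :
  0 < p -> p < 1 -> L < U -> 4 <= U - L -> L <= x -> x <= U ->
  exists l : R, (fun k : nat => m_k p L U x k) @ \oo --> l.
Proof.
move=> p0 p1 LU _ _ _.
have p0' : 0 <= p by apply: ltW.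
have p1' : p <= 1 by apply: ltW.
set n := `|U - L|%N.
have Hn : U - L <= n%:Z by rewrite /n abszE ler_norm.
set m := fun k : nat => m_k p L U x k.
have m0 : m 0%N = 0.
  have -> : m 0%N = EE p 0 (fun w => (tau L U x 0 w)%:R) by [].
  by rewrite E0 tau0.
have mS : forall k, m k.+1 = m k + q p L U x k by move=> k; apply: m_rec.
have qb : forall k, 0 <= q p L U x k <= 1 by move=> k; apply: q_bounds.
have mono : forall k, m k <= m k.+1.
  by move=> k; rewrite mS lerDl; case/andP: (qb k).
have Mk : forall k, m k <= k%:R.
  elim=> [|k IH]; first by rewrite m0.
  rewrite mS -addn1 natrD lerD //; by case/andP: (qb k).
have cn : 0 <= 1 - p ^+ n by rewrite subr_ge0 exprn_ile1.
have Hb : forall K, m (K + n)%N <= n%:R + (1 - p ^+ n) * m K.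
  elim=> [|K IH]; first by rewrite add0n m0 mulr0 addr0.
  rewrite addSn mS mS mulrDr addrA lerD //.
  exact: (q_decay R p L U x K n p0' p1' Hn).
have monoLe : forall K j, m K <= m (K + j)%N.
  move=> K; elim=> [|j IH]; first by rewrite addn0.
  by rewrite addnS (le_trans IH (mono _)).
have pn : 0 < p ^+ n by rewrite exprn_gt0.
have Mb : forall K, m K <= n%:R / p ^+ n.
  move=> K; rewrite ler_pdivlMr //.
  have := le_trans (monoLe K n) (Hb K).
  rewrite mulrBl mul1r mulrC; lra.
exists (sup (range m)); apply: nondecreasing_cvgn.
  by apply/nondecreasing_seqP.
exists (n%:R / p ^+ n) => y [K _ <-]; exact: Mb.
Qed.
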